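(* Let $X,X_H$ be real Hilbert spaces, $I_h^H\in\mathbb{L}(X;X_H)$, and $I_H^h\in\mathbb{L}(X_H;X)$ with $\mu I_H^h=(I_h^H)^*$ for some $\mu>0$. Let $F:X\to\mathbb{R}$ be Fréchet differentiable and $G:X\to\mathbb{R}\cup\{+\infty\}$ convex, proper, lower semicontinuous, and $x^k\in X$. Let $F_H:X_H\to\mathbb{R}$ be convex with $L_H$-Lipschitz gradient, $G_H^k:X_H\to\mathbb{R}\cup\{+\infty\}$ convex, proper, lower semicontinuous, and $\tau_H>0$ with $\epsilon:=2-\tau_HL_H>0$. Let $\zeta^{k,0}\in X_H$ satisfy the nonsmooth coherence condition $I_h^H\partial G(x^k)\subseteq\partial G_H^k(\zeta^{k,0})$. Define $w_H^k:=I_h^H\nabla F(x^k)-\nabla F_H(\zeta^{k,0})$, $F_H^k(\zeta):=F_H(\zeta)+\langle w_H^k,\zeta-\zeta^{k,0}\rangle$, and $\zeta^{k,j+1}:=\operatorname{prox}_{\tau_H G_H^k}(\zeta^{k,j}-\tau_H\nabla F_H^k(\zeta^{k,j}))$ for $j=0,\dots,m-1$. Let $d:=I_H^h(\zeta^{k,m}-\zeta^{k,0})$. Then $$\sup_{g\in\partial G(x^k)}\langle g+\nabla F(x^k),d\rangle\le-\frac{\epsilon}{2\mu\tau_H}\sum_{j=0}^{m-1}\|\zeta^{k,j+1}-\zeta^{k,j}\|^2\le 0.$$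
   Context: $I_h^H$ is called the restriction and $I_H^h$ the prolongation operator. $I_h^H\partial G(x^k):=\{I_h^Hg: g\in\partial G(x^k)\}$. The supremum over the empty set is $-\infty$. $\operatorname{prox}$ is the proximal operator. *)

(* Defs.v *)
From HB Require Import structures.
From mathcomp Require Import all_boot all_order all_algebra.
From mathcomp Require Import all_classical all_reals all_analysis.
Set Implicit Arguments. Unset Strict Implicit. Unset Printing Implicit Defensive.
Import Order.TTheory GRing.Theory Num.Theory.
Import numFieldNormedType.Exports.
Local Open Scope classical_set_scope.
Local Open Scope ring_scope.

(* ip is a (real) inner product on V inducing the norm of V.
   A real Hilbert space is a complete normed space V together with such ip. *)
Definition inner_product (R : realType) (V : normedModType R) (ip : V -> V -> R) :=
  [/\ (forall x y, ip x y = ip y x),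
      (forall (a : R) x y z, ip (a *: x + y) z = a * ip x z + ip y z)
    & (forall x, ip x x = `|x| ^+ 2)].

Definition is_adjoint (R : realType) (V W : normedModType R)
  (ipV : V -> V -> R) (ipW : W -> W -> R) (A : V -> W) (B : W -> V) :=
  forall x y, ipW (A x) y = ipV x (B y).

Definition is_gradient (R : realType) (V : normedModType R)
  (ip : V -> V -> R) (F : V -> R) (gradF : V -> V) :=
  forall x, differentiable F x /\ forall h, 'd F x h = ip (gradF x) h.

Definition convex_fun (R : realType) (V : normedModType R) (F : V -> R) :=
  forall x y (t : R), 0 <= t <= 1 ->
    F (t *: x + (1 - t) *: y) <= t * F x + (1 - t) * F y.

Local Open Scope ereal_scope.

Definition convex_efun (R : realType) (V : normedModType R) (G : V -> \bar R) :=
  (forall x, G x != -oo) /\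
  forall x y (t : R), (0 < t < 1)%R ->
    G (t *: x + (1 - t) *: y)%R <= t%:E * G x + (1 - t)%:E * G y.

Definition proper_efun (R : realType) (V : normedModType R) (G : V -> \bar R) :=
  (forall x, G x != -oo) /\ exists x, G x < +oo.

Definition subdiff (R : realType) (V : normedModType R) (ip : V -> V -> R)
  (G : V -> \bar R) (x : V) : set V :=
  [set g | G x \is a fin_num /\ forall y, G x + (ip g (y - x)%R)%:E <= G y].

Definition is_prox (R : realType) (V : normedModType R) (tau : R)
  (G : V -> \bar R) (v p : V) :=
  forall z, tau%:E * G p + ((2%:R)^-1 * `|(p - v)%R| ^+ 2)%:E
            <= tau%:E * G z + ((2%:R)^-1 * `|(z - v)%R| ^+ 2)%:E.

(* Main.v *)
Require Import Defs.
From HB Require Import structures.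
From mathcomp Require Import all_boot all_order all_algebra.
From mathcomp Require Import all_classical all_reals all_analysis.
From mathcomp Require Import ring lra.
Import Order.TTheory GRing.Theory Num.Theory.
Import numFieldNormedType.Exports.
Local Open Scope classical_set_scope.
Local Open Scope ring_scope.
Set Implicit Arguments. Unset Strict Implicit.

Section IP.
Variables (R : realType) (V : normedModType R) (ip : V -> V -> R).
Hypothesis hip : inner_product ip.

Lemma ipC x y : ip x y = ip y x.
Proof. by case: hip. Qed.
Lemma ipL a x y z : ip (a *: x + y) z = a * ip x z + ip y z.
Proof. by case: hip. Qed.
Lemma ipn x : ip x x = `|x| ^+ 2.
Proof. by case: hip. Qed.
Lemma ip0l z : ip 0 z = 0.
Proof.
have := ipL 1 0 0 z; rewrite scaler0 addr0 mul1r => H.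
have : ip 0 z - ip 0 z = ip 0 z + ip 0 z - ip 0 z by rewrite -H.
by rewrite subrr addrK => ->.
Qed.
Lemma ipDl x y z : ip (x + y) z = ip x z + ip y z.
Proof. by rewrite -[x]scale1r ipL mul1r scale1r. Qed.
Lemma ipZl a x z : ip (a *: x) z = a * ip x z.
Proof. by rewrite -[a *: x]addr0 ipL ip0l addr0. Qed.
Lemma ipNl x z : ip (- x) z = - ip x z.
Proof. by rewrite -scaleN1r ipZl mulN1r. Qed.
Lemma ipBl x y z : ip (x - y) z = ip x z - ip y z.
Proof. by rewrite ipDl ipNl. Qed.
Lemma ip0r z : ip z 0 = 0.
Proof. by rewrite ipC ip0l. Qed.
Lemma ipDr x y z : ip z (x + y) = ip z x + ip z y.
Proof. by rewrite ipC ipDl !(ipC z). Qed.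
Lemma ipZr a x z : ip z (a *: x) = a * ip z x.
Proof. by rewrite ipC ipZl ipC. Qed.
Lemma ipNr x z : ip z (- x) = - ip z x.
Proof. by rewrite ipC ipNl ipC. Qed.
Lemma ipBr x y z : ip z (x - y) = ip z x - ip z y.
Proof. by rewrite ipDr ipNr. Qed.

Lemma ip_sq x y : `|x - y| ^+ 2 = `|x| ^+ 2 - 2 * ip x y + `|y| ^+ 2.
Proof.
rewrite -!ipn ipBl !ipBr (ipC y x). lra.
Qed.

Lemma ip_cs a b : ip a b <= `|a| * `|b|.
Proof.
have [a0|an0] := eqVneq a 0; first by rewrite a0 ip0l normr0 mul0r.
have [b0|bn0] := eqVneq b 0; first by rewrite b0 ip0r normr0 mulr0.
have h := ip_sq (`|b| *: a) (`|a| *: b).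
have hp : 0 < `|a| * `|b| by rewrite mulr_gt0 // normr_gt0.
have : 0 <= `| (`|b| *: a) - (`|a| *: b) | ^+ 2 by exact: sqr_ge0.
rewrite h ipZl ipZr !normrZ !normr_id => H.
have : `|a| * `|b| * ip a b <= `|a| * `|b| * (`|a| * `|b|) by nra.
by rewrite ler_pM2l.
Qed.
End IP.

Section S.
Variables (R : realType) (V : normedModType R) (ip : V -> V -> R).
Variables (f : V -> R) (g : V -> V).
Hypothesis hf : is_gradient ip f g.

Lemma line_eq (x v : V) (t : R) :
  (fun h : R => h^-1 *: (((fun s : R => f (x + s *: v)) \o shift t) (h *: 1) - f (x + t *: v)))
  = (fun h : R => h^-1 *: ((f \o shift (x + t *: v)) (h *: v) - f (x + t *: v))).
Proof.
apply/funext => h /=. congr (_ *: (f _ - _)).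
by rewrite scaler1 scalerDl addrCA addrA.
Qed.

Lemma line_derivable (x v : V) (t : R) :
  derivable (fun s : R => f (x + s *: v)) t 1.
Proof.
rewrite /derivable line_eq. have [d _] := hf (x + t *: v).
have := @diff_derivable _ _ _ _ _ v d. rewrite /derivable. exact.
Qed.

Lemma line_derive (x v : V) (t : R) :
  derive1 (fun s : R => f (x + s *: v)) t = ip (g (x + t *: v)) v.
Proof.
rewrite derive1E /derive line_eq. have [d e] := hf (x + t *: v).
rewrite -e -deriveE //.
Qed.

Lemma line_is_derive (x v : V) (t : R) :
  is_derive t (1:R) (fun s : R => f (x + s *: v)) (ip (g (x + t *: v)) v).
Proof.
apply: DeriveDef; first exact: line_derivable.
by rewrite -derive1E line_derive.
Qed.

Lemma convex_grad (hc : convex_fun f) (x y : V) :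
  f x + ip (g x) (y - x) <= f y.
Proof.
set P := fun s : R => f (x + s *: (y - x)).
have D := line_is_derive x (y - x) 0.
rewrite scale0r addr0 in D.
have Hc : (fun h : R => h^-1 *: ((P \o shift 0) (h *: 1) - P 0)) @ 0^' --> ip (g x) (y - x).
  have := @derivableP _ _ _ P 0 1 (@ex_derive _ _ _ _ _ _ _ D).
  move=> [_]. rewrite (@derive_val _ _ _ _ _ _ _ D) => _.
  have := @ex_derive _ _ _ _ _ _ _ D. rewrite /derivable => /cvg_ex [l Hl].
  suff <- : l = ip (g x) (y - x) by [].
  rewrite -(@derive_val _ _ _ _ _ _ _ D) /derive. by rewrite (cvg_lim _ Hl).
have Hr : (fun h : R => h^-1 *: ((P \o shift 0) (h *: 1) - P 0)) @ 0^'+ --> ip (g x) (y - x).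
  move=> A /Hc /nbhs_ballP [_ /posnumP[e] xe_A].
  by exists e%:num => //= z xe_z /gt_eqF/negbT/xe_A; exact.
rewrite -lerBrDl.
apply: (cvgr_to_le Hr).
near=> h.
have h0 : 0 < h by near: h; exact: nbhs_right_gt.
have h1 : h < 1 by near: h; exact: nbhs_right_lt.
rewrite /= /P scale0r addr0 scaler1 addr0.
have -> : x + h *: (y - x) = h *: y + (1 - h) *: x.
  by rewrite scalerBr scalerBl scale1r addrCA addrA.
have := hc y x h. rewrite (ltW h0) (ltW h1) => /(_ isT) H.
rewrite /GRing.scale /= ler_pdivrMl //. lra.
Unshelve. all: by end_near.
Qed.

Hypothesis hip : inner_product ip.
Lemma descent (L : R) (hL : forall a b, `|g a - g b| <= L * `|a - b|) (x y : V) :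
  f y <= f x + ip (g x) (y - x) + L / 2 * `|y - x| ^+ 2.
Proof.
set v := y - x. set c := ip (g x) v. set k := L / 2 * `|v| ^+ 2.
set P := fun s : R => f (x + s *: v).
set psi := P - c \*: id - k \*: (id * id : R -> R).
have D t : is_derive t (1:R) psi (ip (g (x + t *: v)) v - c - k * (2 * t)).
  have := line_is_derive x v t => HP.
  apply: is_derive_eq.
  rewrite !scaler1 ?mulr1; rewrite [2]/(1+1) mulrDl !mul1r. by [].
have hle : psi 1 <= psi 0.
  apply: (@ler0_derive1_le_cc _ psi 0 1).
  - by move=> t _; exact: (@ex_derive _ _ _ _ _ _ _ (D t)).
  - move=> t; rewrite in_itv /= => /andP [t0 t1].
    rewrite derive1E (@derive_val _ _ _ _ _ _ _ (D t)).
    rewrite /c -(@ipBl _ _ _ hip).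
    have := @ip_cs _ _ _ hip (g (x + t *: v) - g x) v.
    have := hL (x + t *: v) x. rewrite [x + t *: v - x]addrC addKr normrZ gtr0_norm //.
    have nv := normr_ge0 v.
    rewrite /k => H1 H2.
    have : `|g (x + t *: v) - g x| * `|v| <= L * (t * `|v|) * `|v| by exact: ler_wpM2r.
    nra.
  - apply: derivable_within_continuous => t _.
    exact: (@ex_derive _ _ _ _ _ _ _ (D t)).
  - by rewrite in_itv /= lexx ler01.
  - by rewrite in_itv /= lexx ler01.
  - exact: ler01.
move: hle; rewrite /psi /P /=.
change (f (x + 1 *: v) - c * 1 - k * (1 * 1) <= f (x + 0 *: v) - c * 0 - k * (0*0) -> f y <= f x + c + k).
rewrite scale1r scale0r addr0 /v [x + (y - x)]addrC subrK. lra.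
Qed.
End S.

Lemma small_t (R : realType) (A B C : R) :
  0 <= C -> (forall t, 0 < t < 1 -> A <= B + t * C) -> A <= B.
Proof.
move=> C0 H; apply/ler_addgt0Pr => e e0.
have d0 : 0 < e + C + 1 by lra.
have t0 : 0 < e / (e + C + 1) by rewrite divr_gt0.
have t1 : e / (e + C + 1) < 1 by rewrite ltr_pdivrMr // mul1r; lra.
have := H _ (andb_true_intro (conj t0 t1)).
have : e / (e + C + 1) * C <= e.
  rewrite mulrAC ler_pdivrMr //. nra.
lra.
Qed.

Section Prox.
Variables (R : realType) (V : normedModType R) (ip : V -> V -> R).
Hypothesis hip : inner_product ip.
Variables (G : V -> \bar R) (hGc : convex_efun G) (hGp : proper_efun G).
Variables (tau : R) (htau : 0 < tau) (v p : V) (hp : is_prox tau G v p).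

Lemma prox_fin : G p \is a fin_num.
Proof.
case: hGp => hn [z0 hz0].
apply/fin_numP; split; first exact: hn.
apply/negP => /eqP Gp.
have := hp z0. rewrite Gp gt0_muley ?lte_fin // addye //.
rewrite leye_eq => /eqP.
have := hn z0.
case: (G z0) hz0 => [r| |] //= _ _; by rewrite -EFinM -EFinD.
Qed.

Lemma ipsqD (a b : V) : (`|a + b| ^+ 2 = `|a| ^+ 2 + 2 * ip a b + `|b| ^+ 2)%R.
Proof.
by rewrite -[b]opprK (@ip_sq _ _ _ hip) (@ipNr _ _ _ hip) normrN opprK; lra.
Qed.

Lemma prox_ineq z : G z \is a fin_num ->
  (tau * fine (G p) + ip (v - p) (z - p) <= tau * fine (G z))%R.
Proof.
move=> fz.
have fp := prox_fin.
set gp := fine (G p); set gz := fine (G z).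
apply: (@small_t _ _ _ (2^-1 * `|z - p| ^+ 2)%R).
  by rewrite mulr_ge0 // ?invr_ge0 // sqr_ge0.
move=> t /andP [t0 t1].
set q := (t *: z + (1 - t) *: p)%R.
have hq : (G q <= (t * gz + (1 - t) * gp)%:E)%E.
  have := (proj2 hGc) z p t; rewrite t0 t1 => /(_ isT).
  by rewrite -(fineK fz) -(fineK fp) -!EFinM -EFinD.
have fq : G q \is a fin_num.
  apply/fin_numP; split; first exact: (proj1 hGc).
  by apply/negP => /eqP e; move: hq; rewrite e.
have := hp q. rewrite -(fineK fq) -(fineK fp) -!EFinM -!EFinD lee_fin.
move: hq; rewrite -(fineK fq) lee_fin => hq.
have -> : (q - v = (p - v) + t *: (z - p))%R.
  rewrite /q scalerBr scalerBl scale1r.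
  by rewrite [(t *: z + _)%R]addrCA addrAC.
rewrite (ipsqD (p - v)%R) normrZ gtr0_norm // (@ipZr _ _ _ hip) (@ipC _ _ _ hip (p - v)%R).
have -> : (v - p = - (p - v))%R by rewrite opprB.
rewrite (@ipNl _ _ _ hip).
set I := ip (z - p) (p - v). set N := `|z - p|.
move=> H.
have : (t * (tau * gp) <= t * (tau * gz + I + 2^-1 * t * N ^+ 2))%R.
  have : (tau * fine (G q) <= tau * (t * gz + (1 - t) * gp))%R by rewrite ler_pM2l.
  rewrite /= -/gp in H. nra.
rewrite ler_pM2l // (@ipC _ _ _ hip (p - v)) -/I. lra.
Qed.
End Prox.

Lemma grad_affine (R : realType) (V : normedModType R) (ip : V -> V -> R)
  (hip : inner_product ip) (f : V -> R) (g : V -> V) (hf : is_gradient ip f g)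
  (w z0 : V) (gk : V -> V)
  (hk : is_gradient ip (fun z => f z + ip w (z - z0)) gk) (z : V) :
  gk z = g z + w.
Proof.
have E u : ip (gk z) u = ip (g z) u + ip w u.
  have D1 := @line_is_derive _ _ ip _ _ hk z u 0.
  have D2 : is_derive (0:R) (1:R) ((fun s : R => f (z + s *: u)) + cst (ip w (z - z0)) + (ip w u) \*: id)
     (ip (g (z + 0 *: u)) u + 0 + ip w u *: 1).
    have := @line_is_derive _ _ ip _ _ hf z u 0. move=> HP. exact: is_deriveD.
  have Ef : (fun s : R => f (z + s *: u) + ip w (z + s *: u - z0)) =
            ((fun s : R => f (z + s *: u)) + cst (ip w (z - z0)) + (ip w u) \*: id).
    apply/funext => s /=.
    change (f (z + s*:u) + ip w (z + s*:u - z0) = f (z + s*:u) + ip w (z - z0) + ip w u * s).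
    rewrite -[RHS]addrA; congr (_ + _).
    rewrite [z + s *: u - z0]addrAC [LHS](@ipDr _ _ _ hip) (@ipZr _ _ _ hip).
    by rewrite mulrC.
  rewrite Ef in D1.
  have := @derive_val _ _ _ _ _ _ _ D1.
  rewrite (@derive_val _ _ _ _ _ _ _ D2) scale0r addr0 addr0.
  move=> <-. by rewrite /GRing.scale /= mulr1.
apply/eqP; rewrite -subr_eq0 -normr_eq0 -sqrf_eq0 -(@ipn _ _ _ hip).
by rewrite (@ipBl _ _ _ hip) E -(@ipDl _ _ _ hip) subrr.
Qed.

Unset Implicit Arguments.
Theorem mainTheorem2 (R : realType)
  (X : completeNormedModType R) (ipX : X -> X -> R)
  (XH : completeNormedModType R) (ipXH : XH -> XH -> R)
  (hX : inner_product ipX) (hXH : inner_product ipXH)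
  (Rop : {linear X -> XH}) (Pop : {linear XH -> X})
  (hRc : continuous Rop) (hPc : continuous Pop)
  (mu : R) (hmu : 0 < mu)
  (hadj : is_adjoint ipX ipXH Rop (fun z => mu *: Pop z))
  (F : X -> R) (gradF : X -> X) (hF : is_gradient ipX F gradF)
  (G : X -> \bar R) (hGc : convex_efun G) (hGp : proper_efun G)
  (hGl : lower_semicontinuous G)
  (xk : X)
  (FH : XH -> R) (gradFH : XH -> XH) (hFH : is_gradient ipXH FH gradFH)
  (hFHc : convex_fun FH)
  (LH : R) (hLH : forall a b, `|gradFH a - gradFH b| <= LH * `|a - b|)
  (GHk : XH -> \bar R) (hGHc : convex_efun GHk) (hGHp : proper_efun GHk)
  (hGHl : lower_semicontinuous GHk)
  (tauH : R) (htau : 0 < tauH) (heps : 0 < 2 - tauH * LH)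
  (zeta : nat -> XH)
  (hcoh : forall g, subdiff ipX G xk g -> subdiff ipXH GHk (zeta 0%N) (Rop g))
  (gradFHk : XH -> XH)
  (hFHk : is_gradient ipXH
            (fun z => FH z + ipXH (Rop (gradF xk) - gradFH (zeta 0%N)) (z - zeta 0%N))
            gradFHk)
  (m : nat)
  (hzeta : forall j, (j < m)%N ->
     is_prox tauH GHk (zeta j - tauH *: gradFHk (zeta j)) (zeta j.+1)) :
  let eps := 2 - tauH * LH in
  let d := Pop (zeta m - zeta 0%N) in
  let rhs := - (eps / (2 * mu * tauH)) * \sum_(j < m) `|zeta j.+1 - zeta j| ^+ 2 in
  (ereal_sup [set (ipX (g + gradF xk) d)%:E | g in subdiff ipX G xk] <= rhs%:E)%E
  /\ rhs <= 0.
Proof.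
move=> eps d rhs.
set S := \sum_(j < m) `|zeta j.+1 - zeta j| ^+ 2.
have S0 : 0 <= S by apply: sumr_ge0 => j _; exact: sqr_ge0.
have hK : 0 < 2 * mu * tauH by rewrite !mulr_gt0.
split; last first.
  rewrite /rhs mulNr oppr_le0 mulr_ge0 //.
  by rewrite divr_ge0 // ltW.
apply: ub_ereal_sup => _ [g hg <-]; rewrite lee_fin.
have [fin0 hsub0] := hcoh g hg.
set z0 := zeta 0%N.
set w := Rop (gradF xk) - gradFH z0.
have gk z : gradFHk z = gradFH z + w := grad_affine hXH hFH hFHk z.
have fin : forall j, (j <= m)%N -> GHk (zeta j) \is a fin_num.
  elim=> [|j IH] hj; first exact: fin0.
  exact: (prox_fin hGHp htau (hzeta j hj)).
set a := fun j => fine (GHk (zeta j)).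
set Fk := fun z => FH z + ipXH w (z - z0).
set Phi := fun j => Fk (zeta j) + a j.
have step : forall j, (j < m)%N ->
   tauH * Phi j.+1 <= tauH * Phi j - eps / 2 * `|zeta j.+1 - zeta j| ^+ 2.
  move=> j hj.
  have P := prox_ineq hXH hGHc hGHp htau (hzeta j hj) (fin j (ltnW hj)).
  have D := descent hFH hXH hLH (zeta j) (zeta j.+1).
  set Dl := zeta j.+1 - zeta j.
  have e1 : zeta j - tauH *: gradFHk (zeta j) - zeta j.+1 = - Dl - tauH *: gradFHk (zeta j).
    by rewrite /Dl opprB addrAC addrC.
  have e2 : zeta j - zeta j.+1 = - Dl by rewrite /Dl opprB.
  rewrite e1 e2 (@ipNr _ _ _ hXH) (@ipBl _ _ _ hXH) (@ipNl _ _ _ hXH)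
    (@ipZl _ _ _ hXH) (@ipn _ _ _ hXH) gk (@ipDl _ _ _ hXH) in P.
  rewrite /Phi /Fk -/Dl.
  have e3 : zeta j.+1 - z0 = (zeta j - z0) + Dl by rewrite /Dl [RHS]addrC [RHS]addrA subrK.
  rewrite e3 (@ipDr _ _ _ hXH) -/(a j) -/(a j.+1) /eps.
  move: P D; rewrite -/(a j) -/(a j.+1) -/Dl.
  set A := ipXH (gradFH (zeta j)) Dl. set B := ipXH w Dl. set N := `|Dl|.
  move=> P D.
  have : tauH * FH (zeta j.+1) <= tauH * (FH (zeta j) + A + LH / 2 * N ^+ 2) by rewrite ler_pM2l.
  nra.
have tele : forall n, (n <= m)%N ->
   tauH * Phi n <= tauH * Phi 0%N - eps / 2 * \sum_(j < n) `|zeta j.+1 - zeta j| ^+ 2.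
  elim=> [|n IH] hn; first by rewrite big_ord0 mulr0 subr0.
  rewrite big_ord_recr /=.
  have := step n hn. have := IH (ltnW hn). lra.
have T := tele m (leqnn m). rewrite -/S in T.
have hs := hsub0 (zeta m). rewrite -(fineK fin0) -(fineK (fin m (leqnn m))) -EFinD lee_fin in hs.
have C := convex_grad hFH hFHc z0 (zeta m).
have Ezero : Phi 0%N = FH z0 + a 0%N by rewrite /Phi /Fk subrr (@ip0r _ _ _ hXH) addr0.
have Ezm : Phi m = FH (zeta m) + ipXH w (zeta m - z0) + a m by [].
have key : ipXH (Rop (g + gradF xk)) (zeta m - z0) = mu * ipX (g + gradF xk) d.
  by rewrite hadj (@ipZr _ _ _ hX).
have hR : Rop (g + gradF xk) = Rop g + gradFH z0 + w.
  by rewrite linearD /w -[RHS]addrA [gradFH z0 + _]addrC subrK.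
rewrite hR (@ipDl _ _ _ hXH) (@ipDl _ _ _ hXH) in key.
rewrite Ezero Ezm in T.
move: hs; rewrite -/(a 0%N) -/(a m) => hs.
set s := ipX (g + gradF xk) d.
rewrite -/s in key.
have H1 : tauH * (mu * s) <= - (eps / 2 * S).
  have : tauH * (mu * s) <= tauH * (FH (zeta m) + ipXH w (zeta m - z0) + a m - (FH z0 + a 0%N)).
    rewrite ler_pM2l //. rewrite -/z0 in hs. lra.
  lra.
rewrite /rhs -(ler_pM2r hK).
have -> : - (eps / (2 * mu * tauH)) * S * (2 * mu * tauH) = - (eps / 2 * S) * 2.
  field. by rewrite gt_eqF // gt_eqF.
have -> : s * (2 * mu * tauH) = tauH * (mu * s) * 2 by ring.
by rewrite ler_pM2r.
Qed.
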